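(* Let $n\ge 3$. A permutation $\pi=(\pi_1,\ldots,\pi_n)$ of $\{1,\ldots,n\}$ is convex, i.e. satisfies $\pi_2-\pi_1\le\pi_3-\pi_2\le\cdots\le\pi_n-\pi_{n-1}$, if and only if $\pi$ is one of the following permutations or the reverse $(\pi_n,\ldots,\pi_1)$ of one of them: (i) $(1,2,\ldots,n)$; (ii) $(n,1,2,\ldots,n-1)$; (iii) $(n-1,1,2,\ldots,n-2,n)$; (iv) $\Pi^*_n$.
   Context: $\Pi^*_n$ is the permutation whose matrix is obtained by rotating the permutation matrix of $\pi_{(n)}$ counter-clockwise by $90$ degrees, where $\pi_{(n)}=(p,p+1,p-1,p+2,\ldots,1,2p)$ if $n=2p$ and $\pi_{(n)}=(p+1,p+2,p,p+3,\ldots,2p+1,1)$ if $n=2p+1$ (permutation matrices have $1$ in positions $(i,\pi_i)$). Explicitly, $\Pi^*_n$ lists the even numbers of $\{1,\ldots,n\}$ in decreasing order followed by the odd numbers in increasing order: $\Pi^*_n=(n,n-2,\ldots,2,1,3,\ldots,n-1)$ for $n$ even and $\Pi^*_n=(n-1,n-3,\ldots,2,1,3,\ldots,n)$ for $n$ odd. *)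

(* Defs.v *)
From mathcomp Require Import all_boot all_order all_algebra.
Set Implicit Arguments. Unset Strict Implicit. Unset Printing Implicit Defensive.
Import GRing.Theory Num.Theory.

Definition is_perm (n : nat) (s : seq nat) : Prop := perm_eq s (iota 1 n).

Definition convex_perm (s : seq nat) : Prop :=
  forall i : nat, i.+2 < size s ->
    ((nth 0 s i.+1)%:Z - (nth 0 s i)%:Z <= (nth 0 s i.+2)%:Z - (nth 0 s i.+1)%:Z)%R.

Definition perm_id_seq (n : nat) : seq nat := iota 1 n.
Definition perm_ii (n : nat) : seq nat := n :: iota 1 (n - 1).
Definition perm_iii (n : nat) : seq nat := (n - 1) :: rcons (iota 1 (n - 2)) n.
Definition Pi_star (n : nat) : seq nat :=
  rev [seq k <- iota 1 n | ~~ odd k] ++ [seq k <- iota 1 n | odd k].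

(* Main.v *)
Require Import Defs.
From mathcomp Require Import all_boot all_order all_algebra.
From mathcomp Require Import zify.
Import GRing.Theory Num.Theory.

Definition convexN (s : seq nat) : Prop :=
  forall i, i.+2 < size s -> 2 * nth 0 s i.+1 <= nth 0 s i + nth 0 s i.+2.

Lemma intE (a b c : nat) : ((a%:Z - b%:Z <= c%:Z - a%:Z)%R) = (2 * a <= b + c).
Proof.
rewrite lerBlDr addrAC lerBrDl -!PoszD lez_nat. lia.
Qed.
Lemma convexE s : convex_perm s <-> convexN s.
Proof.
rewrite /convex_perm /convexN; split=> H i Hi; have := H i Hi; rewrite intE //.
Qed.

Lemma iotaSr m n : iota m n.+1 = rcons (iota m n) (m + n).
Proof. by rewrite -addn1 iotaD cats1. Qed.

Lemma Pi_star_S n : Pi_star n.+1 =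
  if odd n.+1 then rcons (Pi_star n) n.+1 else n.+1 :: Pi_star n.
Proof.
rewrite /Pi_star iotaSr !filter_rcons add1n.
case h: (odd n.+1) => /=.
  by rewrite rcons_cat.
by rewrite rev_rcons.
Qed.

Lemma size_Pi_star n : size (Pi_star n) = n.
Proof.
elim: n => [//|n IH]; rewrite Pi_star_S; case: ifP => _ /=; by rewrite ?size_rcons IH.
Qed.

Lemma nth_Pi_star n i : i < n -> nth 0 (Pi_star n) i =
  if i < n./2 then 2 * (n./2 - i) else 2 * (i - n./2) + 1.
Proof.
elim: n i => [//|n IH] i Hi; rewrite Pi_star_S.
case: ifP => hodd.
  rewrite nth_rcons size_Pi_star.
  case: ltnP => hin.
    rewrite IH //. have -> : n.+1./2 = n./2 by lia. done.
  have -> : i = n by lia. rewrite eqxx. case: ifP; lia.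
case: i Hi => [|i] Hi /=.
  case: ifP; lia.
rewrite IH; last lia.
have -> : uphalf n = (n./2).+1 by lia.
by case: ifP => _; lia.
Qed.

Lemma convexN_rev s : convexN s -> convexN (rev s).
Proof.
move=> H i; rewrite size_rev => Hi.
rewrite !nth_rev; try lia.
have := H (size s - i.+3).
have -> : (size s - i.+3).+2 = size s - i.+1 by lia.
have -> : (size s - i.+3).+1 = size s - i.+2 by lia.
move=> /(_ _); lia.
Qed.
Lemma convexN_rcons s x : convexN (rcons s x) -> convexN s.
Proof.
move=> H i Hi; have := H i; rewrite size_rcons !nth_rcons.
rewrite !ifT; lia.
Qed.

Lemma convexN_last t a b c : convexN (t ++ [:: a; b; c]) -> 2 * b <= a + c.
Proof.
move=> /(_ (size t)); rewrite size_cat /= !nth_cat ltnn subnn.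
rewrite !ifF; try lia. rewrite !subSn // subnn /=; apply; lia.
Qed.

Lemma conv_iota n : convexN (iota 1 n).
Proof. move=> i; rewrite size_iota => Hi; rewrite !nth_iota; lia. Qed.

Lemma conv_ii n : convexN (perm_ii n).
Proof.
move=> [|i] /=; rewrite size_iota => Hi.
  rewrite !nth_iota; lia.
rewrite !nth_iota; lia.
Qed.

Lemma convexN_cons x s : convexN s ->
  (1 < size s -> 2 * nth 0 s 0 <= x + nth 0 s 1) -> convexN (x :: s).
Proof. move=> H H0 [|i] /= Hi; [apply H0; lia | apply H; lia]. Qed.

Lemma conv_iii n : 3 <= n -> convexN (perm_iii n).
Proof.
case: n => [|[|[|k]]] // _; rewrite /perm_iii.
have -> : k.+3 - 1 = k.+2 by lia.
have -> : k.+3 - 2 = k.+1 by lia.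
apply: convexN_cons.
  move=> i; rewrite size_rcons size_iota => Hi.
  rewrite !nth_rcons size_iota.
  case: (ltnP i.+2 k.+1) => h2.
    rewrite !ifT; try lia. rewrite !nth_iota; lia.
  have -> : i.+2 = k.+1 by lia. rewrite eqxx.
  rewrite !ifT; try lia. rewrite !nth_iota; lia.
rewrite size_rcons size_iota => _.
by case: k => [|k] /=; lia.
Qed.

Lemma conv_Pi n : convexN (Pi_star n).
Proof.
move=> i; rewrite size_Pi_star => Hi.
rewrite !nth_Pi_star; try lia.
move: (n./2) => p.
case: ifP => h1; case: ifP => h2; case: ifP => h3; lia.
Qed.

Definition Forms n s :=
  s = perm_id_seq n \/ s = rev (perm_id_seq n) \/
      s = perm_ii n \/ s = rev (perm_ii n) \/
      s = perm_iii n \/ s = rev (perm_iii n) \/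
      s = Pi_star n \/ s = rev (Pi_star n).

Lemma Forms_rev n s : Forms n s -> Forms n (rev s).
Proof.
rewrite /Forms.
by case=> [->|[->|[->|[->|[->|[->|[->|->]]]]]]]; rewrite ?revK; tauto.
Qed.

Lemma Forms_convex n s : 3 <= n -> Forms n s -> convexN s.
Proof.
move=> n3 H.
suff: forall s, s = perm_id_seq n \/ s = perm_ii n \/ s = perm_iii n \/ s = Pi_star n -> convexN s.
  move=> K; case: H => [->|[->|[->|[->|[->|[->|[->|->]]]]]]];
    try (apply: K; tauto); apply: convexN_rev; apply: K; tauto.
move=> t [->|[->|[->|->]]].
- exact: conv_iota.
- exact: conv_ii.
- exact: conv_iii.
- exact: conv_Pi.
Qed.

Lemma max_end n (s : seq nat) : 0 < n -> perm_eq s (iota 1 n) -> convexN s ->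
  exists t, s = rcons t n \/ s = n :: t.
Proof.
move=> n0 Hp Hc.
have Hu : uniq s by rewrite (perm_uniq Hp) iota_uniq.
have Hsz : size s = n by rewrite (perm_size Hp) size_iota.
have Hm : forall k, k < size s -> 1 <= nth 0 s k <= n.
  move=> k Hk; have := mem_nth 0 Hk; by rewrite (perm_mem Hp) mem_iota add1n ltnS.
have Hn : n \in s by rewrite (perm_mem Hp) mem_iota; lia.
set j := index n s.
have Hj : j < size s by rewrite index_mem.
have Hnj : nth 0 s j = n by rewrite nth_index.
have Hne : forall k, k < size s -> k != j -> nth 0 s k != n.
  move=> k Hk; apply: contra => /eqP E.
  by rewrite /j -E index_uniq.
case: (posnP j) => [j0|jpos].
  case: s Hp Hc Hu Hsz Hm Hn j Hj Hnj Hne j0 => [|x t] //= _ _ _ _ _ _ j _ Hnj _ j0.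
  by exists t; right; rewrite -Hnj j0.
case: (ltnP j (size s).-1) => jlt.
  have := Hc j.-1; rewrite !prednK //.
  have h1 := Hne j.-1; have h2 := Hne j.+1.
  have := Hm j.-1; have := Hm j.+1.
  move: h1 h2; rewrite Hnj; clearbody j; lia.
case/lastP: s Hp Hc Hu Hsz Hm Hn j Hj Hnj Hne jpos jlt => [|t x] //= _ _ _ Hsz _ _ j Hj Hnj _ _ jlt.
exists t; left; rewrite -Hnj; congr rcons.
rewrite size_rcons in Hj jlt.
have -> : j = size t by lia.
by rewrite nth_rcons ltnn eqxx.
Qed.

Lemma last3 (s u : seq nat) a b c : s = u ++ [:: a; b; c] -> convexN s -> 2 * b <= a + c.
Proof. by move=> ->; apply: convexN_last. Qed.
Arguments last3 {s u a b c}.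

Lemma Pi_odd n : odd n.+1 -> Pi_star n.+1 = rcons (Pi_star n) n.+1.
Proof. by move=> h; rewrite Pi_star_S h. Qed.
Lemma Pi_even n : ~~ odd n.+1 -> Pi_star n.+1 = n.+1 :: Pi_star n.
Proof. by move=> h; rewrite Pi_star_S (negbTE h). Qed.

Lemma core m (t : seq nat) : 3 <= m -> Forms m t -> convexN (rcons t m.+1) ->
  Forms m.+1 (rcons t m.+1).
Proof.
rewrite /Forms => m3 H Hc.
case: H => [E|[E|[E|[E|[E|[E|[E|E]]]]]]]; subst t.
- left; by rewrite /perm_id_seq iotaSr.
- do 3 right; left. by rewrite /perm_ii subn1 /= rev_cons.
- do 4 right; left. rewrite /perm_ii /perm_iii /=.
  have -> : m.+1 - 2 = m - 1 by lia. have -> : m.+1 - 1 = m by lia. done.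
- exfalso. case: m m3 Hc => [|[|[|k]]] // _ Hc.
  have E : rcons (rev (perm_ii k.+3)) k.+4 = rev (iota 2 k.+1) ++ [:: 1; k.+3; k.+4].
    rewrite /perm_ii. have -> : k.+3 - 1 = k.+2 by lia.
    by rewrite rev_cons /= rev_cons -!cats1 /= -!catA.
  have := last3 E Hc; lia.
- exfalso. case: m m3 Hc => [|[|[|k]]] // _ Hc.
  have E : rcons (perm_iii k.+3) k.+4 = (k.+2 :: iota 1 k) ++ [:: k.+1; k.+3; k.+4].
    rewrite /perm_iii. have -> : k.+3 - 1 = k.+2 by lia.
    have -> : k.+3 - 2 = k.+1 by lia.
    by rewrite iotaSr add1n -!cats1 /= -!catA.
  have := last3 E Hc; lia.
- case: m m3 Hc => [|[|[|k]]] // _ Hc.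
  have E : rcons (rev (perm_iii k.+3)) k.+4 = (k.+3 :: rev (iota 2 k)) ++ [:: 1; k.+2; k.+4].
    rewrite /perm_iii. have -> : k.+3 - 1 = k.+2 by lia.
    have -> : k.+3 - 2 = k.+1 by lia.
    by rewrite rev_cons rev_rcons /= rev_cons -!cats1 /= -!catA.
  have := last3 E Hc => Hk.
  case: k Hk {E Hc} => [|[|k]] Hk; last lia.
    by do 7 right; reflexivity.
  by do 6 right; left; reflexivity.
- case: (boolP (odd m)) => hm.
    exfalso. case: m m3 Hc hm => [|[|[|k]]] // _ Hc hm.
    have E : rcons (Pi_star k.+3) k.+4 = (k.+2 :: Pi_star k) ++ [:: k.+1; k.+3; k.+4].
      rewrite Pi_odd // Pi_even; last by move: hm => /=; lia.
      rewrite Pi_odd; last by move: hm => /=; lia.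
      by rewrite -!cats1 /= -!catA.
    have := last3 E Hc; lia.
  do 6 right; left. by rewrite Pi_odd.
- case: (boolP (odd m)) => hm.
    do 7 right. by rewrite Pi_even ?rev_cons //= hm.
  exfalso. case: m m3 Hc hm => [|[|[|k]]] // _ Hc hm.
  have E : rcons (rev (Pi_star k.+3)) k.+4 = (k.+2 :: rev (Pi_star k)) ++ [:: k.+1; k.+3; k.+4].
    rewrite Pi_even // Pi_odd; last by move: hm => /=; lia.
    rewrite Pi_even; last by move: hm => /=; lia.
    by rewrite rev_cons rev_rcons rev_cons -!cats1 /= -!catA.
  have := last3 E Hc; lia.
Qed.

Lemma base (s : seq nat) : perm_eq s (iota 1 3) -> convexN s -> Forms 3 s.
Proof.
move=> Hp Hc.
move: Hc.
have : s \in permutations (iota 1 3) by rewrite mem_permutations.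
have -> : permutations (iota 1 3) = [:: [:: 2; 1; 3]; [:: 1; 2; 3]; [:: 3; 1; 2];
   [:: 1; 3; 2]; [:: 2; 3; 1]; [:: 3; 2; 1]] by vm_compute.
rewrite !inE => /orP[/eqP->|/orP[/eqP->|/orP[/eqP->|/orP[/eqP->|/orP[/eqP->|/eqP->]]]]] Hc.
all: rewrite /Forms; try (repeat first [ left; reflexivity | right ]; reflexivity).
all: by move: (Hc 0 isT).
Qed.

Lemma forward n (s : seq nat) : 3 <= n -> perm_eq s (iota 1 n) -> convexN s -> Forms n s.
Proof.
elim: n s => [|m IH] s // Hn.
case: (ltnP m 3) => hm.
  have -> : m.+1 = 3 by lia. exact: base.
have R : forall t : seq nat, perm_eq (rcons t m.+1) (iota 1 m.+1) ->
    convexN (rcons t m.+1) -> Forms m.+1 (rcons t m.+1).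
  move=> t Hp Hc; apply: core => //.
  apply: IH => //; last exact: convexN_rcons Hc.
  move: Hp; rewrite iotaSr add1n perm_rcons perm_sym perm_rcons perm_sym perm_cons //.
move=> Hp Hc.
have [t [E|E]] := max_end m.+1 s isT Hp Hc; subst s.
  exact: R.
rewrite -[_ :: t]revK; apply: Forms_rev.
rewrite rev_cons; apply: R.
  by rewrite -rev_cons perm_rev.
by rewrite -rev_cons; apply: convexN_rev.
Qed.

Theorem theorem4p4 (n : nat) (s : seq nat) :
  3 <= n -> is_perm n s ->
  (convex_perm s <->
     (s = perm_id_seq n \/ s = rev (perm_id_seq n) \/
      s = perm_ii n \/ s = rev (perm_ii n) \/
      s = perm_iii n \/ s = rev (perm_iii n) \/
      s = Pi_star n \/ s = rev (Pi_star n))).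
Proof.
move=> Hn Hp; rewrite convexE; split.
  exact: forward.
exact: Forms_convex.
Qed.
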